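(* Let $(M^n,g)$ be a Riemannian manifold with Levi-Civita connection $\nabla$, and let $K_{bcd}{}^e$ be a $(1,3)$-tensor field satisfying $$\nabla_m K_{bce}{}^m = A\, \nabla_m R_{bce}{}^m + B\,(a_{be}\nabla_c \varphi- a_{ce}\nabla_b\varphi)$$ with nonzero constants $A,B$, a smooth function $\varphi$ and a symmetric Codazzi tensor $a_{bc}$. Suppose $M$ is $K$-recurrent: $\nabla_a K_{bcd}{}^e =\lambda_a K_{bcd}{}^e$ for a nonzero covector field $\lambda$, and suppose $\lambda$ is closed ($\nabla_a\lambda_b=\nabla_b\lambda_a$). Define $B_{abcd}{}^e = \nabla_a K_{bcd}{}^e +\nabla_b K_{cad}{}^e +\nabla_c K_{abd}{}^e$. Then $$R_{am}R_{bce}{}^m + R_{bm}R_{cae}{}^m + R_{cm}R_{abe}{}^m =\frac{1}{A}\nabla_m B_{abce}{}^m .$$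
   Context: Abstract index notation with Einstein summation. $R_{abc}{}^d = \partial_a \Gamma_{bc}^d - \partial_b\Gamma_{ac}^d - \Gamma_{ac}^k\Gamma_{bk}^d + \Gamma_{ak}^d \Gamma_{bc}^k$, $R_{ac}=R_{abc}{}^b$. A Codazzi tensor is a symmetric $(0,2)$ tensor with $\nabla_b a_{cd}=\nabla_c a_{bd}$. *)

(* Defs.v *)
From Stdlib Require Import Reals List ClassicalEpsilon.
Open Scope R_scope.

(* Points of R^n are represented as  nat -> R  (only coordinates < n are used;
   the domain U below forces the others to be 0). *)
Definition pt := nat -> R.

Definition upd (x : pt) (i : nat) (t : R) : pt :=
  fun j => if Nat.eqb j i then t else x j.

Fixpoint sum_to (n : nat) (f : nat -> R) : R :=
  match n with O => 0 | S m => sum_to m f + f m end.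

Definition kdelta (i j : nat) : R := if Nat.eqb i j then 1 else 0.

Definition open_n (n : nat) (U : pt -> Prop) : Prop :=
  (forall x, U x -> forall i, (n <= i)%nat -> x i = 0) /\
  (forall x, U x -> exists eps, 0 < eps /\
     forall y, (forall i, (n <= i)%nat -> y i = 0) ->
               (forall i, (i < n)%nat -> Rabs (y i - x i) < eps) -> U y).

Definition has_partial (f : pt -> R) (i : nat) (x : pt) (l : R) : Prop :=
  derivable_pt_lim (fun t => f (upd x i t)) (x i) l.

(* the partial derivative  \partial_i f  (meaningful where it exists) *)
Definition pd (i : nat) (f : pt -> R) : pt -> R :=
  fun x => epsilon (inhabits 0) (fun l => has_partial f i x l).

Fixpoint iter_pd (ds : list nat) (f : pt -> R) : pt -> R :=
  match ds with nil => f | i :: ds' => pd i (iter_pd ds' f) end.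

Definition continuous_on_n (n : nat) (U : pt -> Prop) (f : pt -> R) : Prop :=
  forall x, U x -> forall eps, 0 < eps -> exists delta, 0 < delta /\
    forall y, U y -> (forall i, (i < n)%nat -> Rabs (y i - x i) < delta) ->
      Rabs (f y - f x) < eps.

Definition smooth (n : nat) (U : pt -> Prop) (f : pt -> R) : Prop :=
  forall ds, Forall (fun i => (i < n)%nat) ds ->
    (forall i, (i < n)%nat -> forall x, U x -> exists l, has_partial (iter_pd ds f) i x l) /\
    continuous_on_n n U (iter_pd ds f).

Definition riemannian (n : nat) (U : pt -> Prop) (g ginv : nat -> nat -> pt -> R) : Prop :=
  (forall i j, (i < n)%nat -> (j < n)%nat -> smooth n U (g i j)) /\
  (forall i j, (i < n)%nat -> (j < n)%nat -> smooth n U (ginv i j)) /\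
  (forall i j x, (i < n)%nat -> (j < n)%nat -> U x -> g i j x = g j i x) /\
  (forall x v, U x -> (exists i, (i < n)%nat /\ v i <> 0) ->
     0 < sum_to n (fun i => sum_to n (fun j => g i j x * v i * v j))) /\
  (forall i j x, (i < n)%nat -> (j < n)%nat -> U x ->
     sum_to n (fun k => g i k x * ginv k j x) = kdelta i j).

Definition christoffel (n : nat) (g ginv : nat -> nat -> pt -> R)
  (i j k : nat) : pt -> R :=
  fun x => / 2 * sum_to n (fun l => ginv k l x *
             (pd i (g j l) x + pd j (g i l) x - pd l (g i j) x)).

Definition riemann (n : nat) (g ginv : nat -> nat -> pt -> R)
  (a b c d : nat) : pt -> R :=
  let G := christoffel n g ginv in
  fun x => pd a (G b c d) x - pd b (G a c d) x
           - sum_to n (fun k => G a c k x * G b k d x)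
           + sum_to n (fun k => G a k d x * G b c k x).

Definition ricci (n : nat) (g ginv : nat -> nat -> pt -> R) (a c : nat) : pt -> R :=
  fun x => sum_to n (fun b => riemann n g ginv a b c b x).

Definition cov01 (n : nat) (G : nat -> nat -> nat -> pt -> R)
  (w : nat -> pt -> R) (a b : nat) : pt -> R :=
  fun x => pd a (w b) x - sum_to n (fun k => G a b k x * w k x).

Definition cov02 (n : nat) (G : nat -> nat -> nat -> pt -> R)
  (T : nat -> nat -> pt -> R) (a b c : nat) : pt -> R :=
  fun x => pd a (T b c) x - sum_to n (fun k => G a b k x * T k c x)
           - sum_to n (fun k => G a c k x * T b k x).

Definition cov13 (n : nat) (G : nat -> nat -> nat -> pt -> R)
  (T : nat -> nat -> nat -> nat -> pt -> R) (a b c d e : nat) : pt -> R :=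
  fun x => pd a (T b c d e) x
           - sum_to n (fun k => G a b k x * T k c d e x)
           - sum_to n (fun k => G a c k x * T b k d e x)
           - sum_to n (fun k => G a d k x * T b c k e x)
           + sum_to n (fun k => G a k e x * T b c d k x).

Definition cov14 (n : nat) (G : nat -> nat -> nat -> pt -> R)
  (T : nat -> nat -> nat -> nat -> nat -> pt -> R) (f a b c d e : nat) : pt -> R :=
  fun x => pd f (T a b c d e) x
           - sum_to n (fun k => G f a k x * T k b c d e x)
           - sum_to n (fun k => G f b k x * T a k c d e x)
           - sum_to n (fun k => G f c k x * T a b k d e x)
           - sum_to n (fun k => G f d k x * T a b c k e x)
           + sum_to n (fun k => G f k e x * T a b c d k x).

Definition Bten (n : nat) (G : nat -> nat -> nat -> pt -> R)
  (K : nat -> nat -> nat -> nat -> pt -> R) (a b c d e : nat) : pt -> R :=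
  fun x => cov13 n G K a b c d e x + cov13 n G K b c a d e x + cov13 n G K c a b d e x.

(* Main.v *)
Require Import Defs.
From Stdlib Require Import Reals List ClassicalEpsilon Lia Lra FunctionalExtensionality PropExtensionality.
Open Scope R_scope.

Lemma upd_same (x : pt) i : upd x i (x i) = x.
Proof. apply functional_extensionality; intro j; unfold upd.
destruct (Nat.eqb_spec j i); subst; auto. Qed.

Lemma upd_upd (x : pt) i s t : upd (upd x i s) i t = upd x i t.
Proof. apply functional_extensionality; intro j; unfold upd.
destruct (Nat.eqb_spec j i); auto. Qed.

Lemma upd_eq (x : pt) i t : upd x i t i = t.
Proof. unfold upd; rewrite Nat.eqb_refl; auto. Qed.

Lemma upd_comm (x : pt) i j s t : i <> j -> upd (upd x i s) j t = upd (upd x j t) i s.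
Proof. intro H; apply functional_extensionality; intro k; unfold upd.
destruct (Nat.eqb_spec k j); destruct (Nat.eqb_spec k i); subst; auto; congruence. Qed.

Lemma pd_eq f i x l : has_partial f i x l -> pd i f x = l.
Proof. intro H. unfold pd.
assert (E : exists l, has_partial f i x l) by eauto.
pose proof (epsilon_spec (inhabits 0) _ E) as H2.
eapply uniqueness_limite; eauto. Qed.

Lemma pd_spec f i x : (exists l, has_partial f i x l) -> has_partial f i x (pd i f x).
Proof. intro E. unfold pd. exact (epsilon_spec (inhabits 0) _ E). Qed.

Lemma open_upd n U x i : open_n n U -> U x -> (i < n)%nat ->
  exists eps, 0 < eps /\ forall t, Rabs (t - x i) < eps -> U (upd x i t).
Proof. intros [H1 H2] Hx Hi. destruct (H2 x Hx) as [eps [Heps H]].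
exists eps; split; auto. intros t Ht. apply H.
- intros j Hj. unfold upd. destruct (Nat.eqb_spec j i). lia. apply H1; auto.
- intros j Hj. unfold upd. destruct (Nat.eqb_spec j i). subst; auto.
  replace (x j - x j) with 0 by ring. rewrite Rabs_R0; auto. Qed.

Lemma local_partial n U f h i x l : open_n n U -> (forall y, U y -> f y = h y) -> U x ->
  (i < n)%nat -> has_partial f i x l -> has_partial h i x l.
Proof. intros HU E Hx Hi Hf. destruct (open_upd n U x i HU Hx Hi) as [e [He HE]].
unfold has_partial, derivable_pt_lim in *. intros eps Heps.
destruct (Hf eps Heps) as [d Hd].
assert (Hm : 0 < Rmin d e) by (apply Rmin_pos; [apply cond_pos | auto]).
exists (mkposreal _ Hm). intros hh Hh0 Hh. simpl in Hh.
assert (U1 : U (upd x i (x i + hh))).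
{ apply HE. replace (x i + hh - x i) with hh by ring. apply Rlt_le_trans with (1:=Hh); apply Rmin_r. }
assert (U2 : U (upd x i (x i))).
{ apply HE. replace (x i - x i) with 0 by ring. rewrite Rabs_R0; auto. }
rewrite <- (E _ U1), <- (E _ U2). apply Hd; auto. apply Rlt_le_trans with (1:=Hh); apply Rmin_l. Qed.

Lemma pd_local n U f h i x : open_n n U -> (forall y, U y -> f y = h y) -> U x ->
  (i < n)%nat -> pd i f x = pd i h x.
Proof. intros HU E Hx Hi.
assert (P : (fun l => has_partial f i x l) = (fun l => has_partial h i x l)).
{ apply functional_extensionality; intro l; apply propositional_extensionality; split;
  apply local_partial with n U; auto. intros; symmetry; auto. }
unfold pd. rewrite P. reflexivity. Qed.

Lemma partial_plus f h i x l1 l2 : has_partial f i x l1 -> has_partial h i x l2 ->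
  has_partial (fun y => f y + h y) i x (l1 + l2).
Proof. unfold has_partial; intros. apply (derivable_pt_lim_plus _ _ _ _ _ H H0). Qed.

Lemma partial_mult f h i x l1 l2 : has_partial f i x l1 -> has_partial h i x l2 ->
  has_partial (fun y => f y * h y) i x (l1 * h x + f x * l2).
Proof. unfold has_partial; intros.
pose proof (derivable_pt_lim_mult _ _ _ _ _ H H0) as K.
unfold mult_fct in K; rewrite upd_same in K. exact K. Qed.

Lemma cont_plus n U f h : continuous_on_n n U f -> continuous_on_n n U h ->
  continuous_on_n n U (fun y => f y + h y).
Proof. intros Hf Hh x Hx eps Heps.
destruct (Hf x Hx (eps/2)) as [d1 [Hd1 H1]]; [lra|].
destruct (Hh x Hx (eps/2)) as [d2 [Hd2 H2]]; [lra|].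
exists (Rmin d1 d2); split; [apply Rmin_pos; auto|].
intros y Hy Hc. 
assert (A1 : Rabs (f y - f x) < eps/2). { apply H1; auto. intros; apply Rlt_le_trans with (1:=Hc i H); apply Rmin_l. }
assert (A2 : Rabs (h y - h x) < eps/2). { apply H2; auto. intros; apply Rlt_le_trans with (1:=Hc i H); apply Rmin_r. }
replace (f y + h y - (f x + h x)) with ((f y - f x) + (h y - h x)) by ring.
apply Rle_lt_trans with (1:=Rabs_triang _ _). lra. Qed.

Lemma cont_mult n U f h : continuous_on_n n U f -> continuous_on_n n U h ->
  continuous_on_n n U (fun y => f y * h y).
Proof. intros Hf Hh x Hx eps Heps.
set (M := Rabs (f x) + Rabs (h x) + 1).
assert (HM : 0 < M) by (unfold M; pose proof (Rabs_pos (f x)); pose proof (Rabs_pos (h x)); lra).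
set (e1 := Rmin 1 (eps / M)).
assert (He1 : 0 < e1) by (apply Rmin_pos; [lra| apply Rdiv_lt_0_compat; auto]).
destruct (Hf x Hx e1) as [d1 [Hd1 H1]]; auto.
destruct (Hh x Hx e1) as [d2 [Hd2 H2]]; auto.
exists (Rmin d1 d2); split; [apply Rmin_pos; auto|].
intros y Hy Hc.
assert (A1 : Rabs (f y - f x) < e1). { apply H1; auto. intros; apply Rlt_le_trans with (1:=Hc i H); apply Rmin_l. }
assert (A2 : Rabs (h y - h x) < e1). { apply H2; auto. intros; apply Rlt_le_trans with (1:=Hc i H); apply Rmin_r. }
replace (f y * h y - f x * h x) with (f y * (h y - h x) + h x * (f y - f x)) by ring.
apply Rle_lt_trans with (1:=Rabs_triang _ _). rewrite !Rabs_mult.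
assert (e1le : e1 <= 1) by apply Rmin_l.
assert (e1le2 : e1 * M <= eps).
{ assert (e1 <= eps / M) by apply Rmin_r. apply Rmult_le_compat_r with (r:=M) in H; [|lra].
  unfold Rdiv in H. rewrite Rmult_assoc, Rinv_l in H; lra. }
assert (Rabs (f y) <= Rabs (f x) + e1).
{ replace (f y) with (f x + (f y - f x)) by ring. 
  apply Rle_trans with (1:=Rabs_triang _ _). lra. }
pose proof (Rabs_pos (h y - h x)). pose proof (Rabs_pos (f y - f x)).
pose proof (Rabs_pos (h x)). pose proof (Rabs_pos (f x)).
unfold M in *. 
apply Rle_lt_trans with ((Rabs (f x) + e1) * Rabs (h y - h x) + Rabs (h x) * Rabs (f y - f x)).
{ apply Rplus_le_compat_r. apply Rmult_le_compat_r; auto. }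
nra. Qed.
Inductive PP (n : nat) (U : pt -> Prop) : (pt -> R) -> Prop :=
| PP_base f : smooth n U f -> PP n U f
| PP_add f h : PP n U f -> PP n U h -> PP n U (fun y => f y + h y)
| PP_mul f h : PP n U f -> PP n U h -> PP n U (fun y => f y * h y)
| PP_ext f h : PP n U f -> (forall y, U y -> f y = h y) -> PP n U h.

Lemma PP_partial n U f : open_n n U -> PP n U f ->
  forall i x, (i < n)%nat -> U x -> exists l, has_partial f i x l.
Proof. intros HU H; induction H; intros i x Hi Hx.
- destruct (H nil (Forall_nil _)) as [H1 _]. apply H1; auto.
- destruct (IHPP1 i x Hi Hx) as [l1 ?]; destruct (IHPP2 i x Hi Hx) as [l2 ?].
  eexists; apply partial_plus; eauto.
- destruct (IHPP1 i x Hi Hx) as [l1 ?]; destruct (IHPP2 i x Hi Hx) as [l2 ?].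
  eexists; apply partial_mult; eauto.
- destruct (IHPP i x Hi Hx) as [l ?]. exists l. eapply local_partial; eauto. Qed.

Lemma PP_has n U f i x : open_n n U -> PP n U f -> (i < n)%nat -> U x -> has_partial f i x (pd i f x).
Proof. intros; apply pd_spec; eapply PP_partial; eauto. Qed.

Lemma PP_cont n U f : PP n U f -> continuous_on_n n U f.
Proof. intro H; induction H.
- destruct (H nil (Forall_nil _)) as [_ H2]; exact H2.
- apply cont_plus; auto.
- apply cont_mult; auto.
- intros x Hx eps Heps. destruct (IHPP x Hx eps Heps) as [d [Hd Hd2]].
  exists d; split; auto. intros y Hy Hc. rewrite <- !H0; auto. Qed.

Lemma iter_pd_app ds i f : iter_pd ds (pd i f) = iter_pd (ds ++ i :: nil) f.
Proof. induction ds; simpl; auto. rewrite IHds; auto. Qed.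

Lemma smooth_pd n U f i : (i < n)%nat -> smooth n U f -> smooth n U (pd i f).
Proof. intros Hi H ds Hds. rewrite iter_pd_app. apply H.
apply Forall_app; split; auto. Qed.

Lemma PP_pd n U f i : open_n n U -> PP n U f -> (i < n)%nat -> PP n U (pd i f).
Proof. intros HU H Hi; induction H.
- apply PP_base; apply smooth_pd; auto.
- eapply PP_ext. apply PP_add; [exact IHPP1 | exact IHPP2].
  intros y Hy. symmetry. apply pd_eq. apply partial_plus; apply (PP_has n U); auto.
- eapply PP_ext. apply PP_add; [apply PP_mul; [exact IHPP1 | exact H0] | apply PP_mul; [exact H | exact IHPP2]].
  intros y Hy. symmetry. apply pd_eq. apply partial_mult; apply (PP_has n U); auto.
- eapply PP_ext. exact IHPP. intros y Hy. apply pd_local with n U; auto. Qed.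

Lemma PP_smooth n U f : open_n n U -> PP n U f -> smooth n U f.
Proof. intros HU H ds Hds.
assert (P : PP n U (iter_pd ds f)).
{ induction Hds; simpl; auto. apply PP_pd; auto. }
split. intros; eapply PP_partial; eauto. apply PP_cont; auto. Qed.

Lemma smooth_const n U c : smooth n U (fun _ => c).
Proof. intros ds Hds.
assert (E : forall ds, iter_pd ds (fun _ : pt => c) = fun _ => match ds with nil => c | _ => 0 end).
{ induction ds0; simpl; auto. rewrite IHds0. apply functional_extensionality; intro y.
  apply pd_eq. unfold has_partial. apply derivable_pt_lim_const. }
rewrite E. split.
- intros i Hi x Hx. exists 0. unfold has_partial. apply derivable_pt_lim_const.
- intros x Hx eps He. exists 1; split; [lra|]. intros. unfold Rminus; rewrite Rplus_opp_r, Rabs_R0; auto. Qed.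

Lemma smooth_add n U f h : open_n n U -> smooth n U f -> smooth n U h -> smooth n U (fun y => f y + h y).
Proof. intros. apply PP_smooth; auto. apply PP_add; apply PP_base; auto. Qed.
Lemma smooth_mul n U f h : open_n n U -> smooth n U f -> smooth n U h -> smooth n U (fun y => f y * h y).
Proof. intros. apply PP_smooth; auto. apply PP_mul; apply PP_base; auto. Qed.
Lemma smooth_ext n U f h : open_n n U -> smooth n U f -> (forall y, U y -> f y = h y) -> smooth n U h.
Proof. intros. apply PP_smooth; auto. eapply PP_ext; [apply PP_base|]; eauto. Qed.
Lemma smooth_opp n U f : open_n n U -> smooth n U f -> smooth n U (fun y => - f y).
Proof. intros. apply (smooth_ext n U (fun y => -1 * f y)); auto. apply smooth_mul; auto. apply smooth_const.
intros; ring. Qed.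
Lemma smooth_sub n U f h : open_n n U -> smooth n U f -> smooth n U h -> smooth n U (fun y => f y - h y).
Proof. intros. apply (smooth_ext n U (fun y => f y + - h y)); auto. apply smooth_add; auto. apply smooth_opp; auto.
Qed.
Lemma smooth_scal n U c f : open_n n U -> smooth n U f -> smooth n U (fun y => c * f y).
Proof. intros. apply smooth_mul; auto. apply smooth_const. Qed.
Lemma smooth_sum n U m F : open_n n U -> (forall k, (k < m)%nat -> smooth n U (F k)) ->
  smooth n U (fun y => sum_to m (fun k => F k y)).
Proof. intros HU; induction m; intros H; simpl.
- apply smooth_const.
- apply smooth_add; auto. Qed.
Lemma pd_add n U f h i x : open_n n U -> smooth n U f -> smooth n U h -> (i < n)%nat -> U x ->
  pd i (fun y => f y + h y) x = pd i f x + pd i h x.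
Proof. intros. apply pd_eq. apply partial_plus; apply (PP_has n U); auto; apply PP_base; auto. Qed.
Lemma pd_mul n U f h i x : open_n n U -> smooth n U f -> smooth n U h -> (i < n)%nat -> U x ->
  pd i (fun y => f y * h y) x = pd i f x * h x + f x * pd i h x.
Proof. intros. apply pd_eq. apply partial_mult; apply (PP_has n U); auto; apply PP_base; auto. Qed.
Lemma pd_const c i x : pd i (fun _ => c) x = 0.
Proof. apply pd_eq. unfold has_partial. apply derivable_pt_lim_const. Qed.
Lemma pd_scal n U c f i x : open_n n U -> smooth n U f -> (i < n)%nat -> U x ->
  pd i (fun y => c * f y) x = c * pd i f x.
Proof. intros. rewrite (pd_mul n U (fun _ => c) f); auto. rewrite pd_const; ring. apply smooth_const. Qed.
Lemma pd_opp n U f i x : open_n n U -> smooth n U f -> (i < n)%nat -> U x ->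
  pd i (fun y => - f y) x = - pd i f x.
Proof. intros. rewrite (pd_local n U (fun y => - f y) (fun y => -1 * f y)); auto.
rewrite (pd_scal n U); auto. ring. intros; ring. Qed.
Lemma pd_sub n U f h i x : open_n n U -> smooth n U f -> smooth n U h -> (i < n)%nat -> U x ->
  pd i (fun y => f y - h y) x = pd i f x - pd i h x.
Proof. intros. unfold Rminus. rewrite (pd_add n U f (fun y => - h y)); auto.
rewrite (pd_opp n U); auto. apply smooth_opp; auto. Qed.
Lemma pd_sum n U m F i x : open_n n U -> (forall k, (k < m)%nat -> smooth n U (F k)) -> (i < n)%nat -> U x ->
  pd i (fun y => sum_to m (fun k => F k y)) x = sum_to m (fun k => pd i (F k) x).
Proof. intros HU; induction m; intros H Hi Hx; simpl.
- apply pd_const.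
- rewrite (pd_add n U); auto. rewrite IHm; auto. apply smooth_sum; auto. Qed.
From Coquelicot Require Import Coquelicot.


Lemma open_box n U x : open_n n U -> U x -> exists eps, 0 < eps /\
  forall i j u v, (i < n)%nat -> (j < n)%nat -> i <> j -> Rabs (u - x i) < eps -> Rabs (v - x j) < eps ->
   U (upd (upd x i u) j v).
Proof. intros [H1 H2] Hx. destruct (H2 x Hx) as [eps [He H]]. exists eps; split; auto.
intros i j u v Hi Hj Hij Hu Hv. apply H.
- intros k Hk. unfold upd. destruct (Nat.eqb_spec k j); [lia|]. destruct (Nat.eqb_spec k i); [lia|]. apply H1; auto.
- intros k Hk. unfold upd. destruct (Nat.eqb_spec k j); [subst; auto|]. destruct (Nat.eqb_spec k i); [subst; auto|].
  replace (x k - x k) with 0 by ring. rewrite Rabs_R0; auto. Qed.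

Lemma derive_of_partial n U f i y : open_n n U -> smooth n U f -> (i < n)%nat -> U y ->
  is_derive (fun t => f (upd y i t)) (y i) (pd i f y).
Proof. intros. apply is_derive_Reals. apply (PP_has n U f i y); auto. apply PP_base; auto. Qed.

Lemma clairaut n U f i j x : open_n n U -> smooth n U f -> (i < n)%nat -> (j < n)%nat -> U x ->
  pd i (pd j f) x = pd j (pd i f) x.
Proof. intros HU Hf Hi Hj Hx. destruct (Nat.eq_dec i j) as [->|Hij]; auto.
destruct (open_box n U x HU Hx) as [eps [He Hbox]].
set (p := fun u v => upd (upd x i u) j v).
set (F := fun u v => f (p u v)).
assert (Pi : forall u v, p u v i = u). { intros; unfold p, upd. rewrite Nat.eqb_refl. destruct (Nat.eqb_spec i j); [lia|auto]. }
assert (Pj : forall u v, p u v j = v). { intros; unfold p; apply upd_eq. }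
assert (Ej : forall u v t, upd (p u v) j t = p u t). { intros; unfold p; apply upd_upd. }
assert (Ei : forall u v t, upd (p u v) i t = p t v).
{ intros; unfold p. rewrite <- upd_comm by auto. rewrite upd_upd; auto. }
assert (Px : p (x i) (x j) = x). { unfold p. rewrite !upd_same; auto. }
assert (Spj : smooth n U (pd j f)) by (apply smooth_pd; auto).
assert (Spi : smooth n U (pd i f)) by (apply smooth_pd; auto).
assert (Inb : forall u v, Rabs (u - x i) < eps -> Rabs (v - x j) < eps -> U (p u v)) by (intros; apply Hbox; auto).
assert (D1 : forall u v, Rabs (u - x i) < eps -> Rabs (v - x j) < eps ->
   is_derive (fun t => F u t) v (pd j f (p u v))).
{ intros u v Hu Hv. pose proof (derive_of_partial n U f j (p u v) HU Hf Hj (Inb u v Hu Hv)) as K.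
  rewrite Pj in K. unfold F. eapply is_derive_ext; [|exact K]. intro t; simpl. rewrite Ej; auto. }
assert (D2 : forall u v, Rabs (u - x i) < eps -> Rabs (v - x j) < eps ->
   is_derive (fun t => F t v) u (pd i f (p u v))).
{ intros u v Hu Hv. pose proof (derive_of_partial n U f i (p u v) HU Hf Hi (Inb u v Hu Hv)) as K.
  rewrite Pi in K. unfold F. eapply is_derive_ext; [|exact K]. intro t; simpl. rewrite Ei; auto. }
assert (he2 : 0 < eps / 2) by lra.
assert (DD1 : forall u v, Rabs (u - x i) < eps/2 -> Rabs (v - x j) < eps ->
   is_derive (fun z => Derive (fun t => F z t) v) u (pd i (pd j f) (p u v))).
{ intros u v Hu Hv.
  pose proof (derive_of_partial n U (pd j f) i (p u v) HU Spj Hi (Inb u v ltac:(lra) Hv)) as K.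
  rewrite Pi in K. eapply is_derive_ext_loc; [|exact K].
  exists (mkposreal _ he2). intros z Hz. change (Rabs (z - u) < eps/2) in Hz.
  rewrite Ei. symmetry. apply is_derive_unique. apply D1; auto.
  replace (z - x i) with ((z - u) + (u - x i)) by ring. apply Rle_lt_trans with (1:=Rabs_triang _ _). lra. }
assert (DD2 : forall u v, Rabs (u - x i) < eps -> Rabs (v - x j) < eps/2 ->
   is_derive (fun z => Derive (fun t => F t z) u) v (pd j (pd i f) (p u v))).
{ intros u v Hu Hv.
  pose proof (derive_of_partial n U (pd i f) j (p u v) HU Spi Hj (Inb u v Hu ltac:(lra))) as K.
  rewrite Pj in K. eapply is_derive_ext_loc; [|exact K].
  exists (mkposreal _ he2). intros z Hz. change (Rabs (z - v) < eps/2) in Hz.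
  rewrite Ej. symmetry. apply is_derive_unique. apply D2; auto.
  replace (z - x j) with ((z - v) + (v - x j)) by ring. apply Rle_lt_trans with (1:=Rabs_triang _ _). lra. }
assert (S := Schwarz F (x i) (x j)).
assert (Z1 : Rabs (x i - x i) < eps/2) by (rewrite Rminus_diag, Rabs_R0; lra).
assert (Z2 : Rabs (x j - x j) < eps/2) by (rewrite Rminus_diag, Rabs_R0; lra).
pose proof (is_derive_unique _ _ _ (DD1 (x i) (x j) Z1 ltac:(lra))) as L1.
pose proof (is_derive_unique _ _ _ (DD2 (x i) (x j) ltac:(lra) Z2)) as L2.
rewrite Px in L1, L2. rewrite <- L1, <- L2. apply S.
- exists (mkposreal _ he2). intros u v Hu Hv. simpl in Hu, Hv.
  repeat split.
  + eexists; apply D2; lra.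
  + eexists; apply D1; lra.
  + eexists; apply DD1; lra.
  + eexists; apply DD2; lra.
- intros e'. destruct (PP_cont n U (pd i (pd j f)) (PP_base _ _ _ (smooth_pd n U _ i Hi Spj)) x Hx e' (cond_pos e')) as [d [Hd Hc]].
  assert (Hm : 0 < Rmin (eps/2) d) by (apply Rmin_pos; lra).
  exists (mkposreal _ Hm). intros u v Hu Hv. simpl in Hu, Hv.
  assert (Hu1 := Rlt_le_trans _ _ _ Hu (Rmin_l _ _)). assert (Hu2 := Rlt_le_trans _ _ _ Hu (Rmin_r _ _)).
  assert (Hv1 := Rlt_le_trans _ _ _ Hv (Rmin_l _ _)). assert (Hv2 := Rlt_le_trans _ _ _ Hv (Rmin_r _ _)).
  assert (Z1' : Rabs (x i - x i) < eps/2) by (rewrite Rminus_diag, Rabs_R0; lra).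
  assert (Z2' : Rabs (x j - x j) < eps/2) by (rewrite Rminus_diag, Rabs_R0; lra).
  replace (Rabs _) with (Rabs (pd i (pd j f) (p u v) - pd i (pd j f) x)).
  2:{ f_equal. f_equal. symmetry; apply is_derive_unique; apply DD1; lra.
     transitivity (pd i (pd j f) (p (x i) (x j))); [rewrite Px; auto | symmetry; apply is_derive_unique; apply DD1; lra]. }
  apply Hc. apply Inb; lra.
  intros k Hk. destruct (Nat.eq_dec k i) as [->|]; [rewrite Pi; auto|].
  destruct (Nat.eq_dec k j) as [->|]; [rewrite Pj; auto|].
  unfold p, upd. destruct (Nat.eqb_spec k j); [lia|]. destruct (Nat.eqb_spec k i); [lia|].
  rewrite Rminus_diag, Rabs_R0; auto.
- intros e'. destruct (PP_cont n U (pd j (pd i f)) (PP_base _ _ _ (smooth_pd n U _ j Hj Spi)) x Hx e' (cond_pos e')) as [d [Hd Hc]].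
  assert (Hm : 0 < Rmin (eps/2) d) by (apply Rmin_pos; lra).
  exists (mkposreal _ Hm). intros u v Hu Hv. simpl in Hu, Hv.
  assert (Hu1 := Rlt_le_trans _ _ _ Hu (Rmin_l _ _)). assert (Hu2 := Rlt_le_trans _ _ _ Hu (Rmin_r _ _)).
  assert (Hv1 := Rlt_le_trans _ _ _ Hv (Rmin_l _ _)). assert (Hv2 := Rlt_le_trans _ _ _ Hv (Rmin_r _ _)).
  assert (Z1' : Rabs (x i - x i) < eps/2) by (rewrite Rminus_diag, Rabs_R0; lra).
  assert (Z2' : Rabs (x j - x j) < eps/2) by (rewrite Rminus_diag, Rabs_R0; lra).
  replace (Rabs _) with (Rabs (pd j (pd i f) (p u v) - pd j (pd i f) x)).
  2:{ f_equal. f_equal. symmetry; apply is_derive_unique; apply DD2; lra.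
     transitivity (pd j (pd i f) (p (x i) (x j))); [rewrite Px; auto | symmetry; apply is_derive_unique; apply DD2; lra]. }
  apply Hc. apply Inb; lra.
  intros k Hk. destruct (Nat.eq_dec k i) as [->|]; [rewrite Pi; auto|].
  destruct (Nat.eq_dec k j) as [->|]; [rewrite Pj; auto|].
  unfold p, upd. destruct (Nat.eqb_spec k j); [lia|]. destruct (Nat.eqb_spec k i); [lia|].
  rewrite Rminus_diag, Rabs_R0; auto.
Qed.
From Stdlib Require Import Setoid Morphisms.

Lemma sum_ext m f h : (forall k, (k < m)%nat -> f k = h k) -> sum_to m f = sum_to m h.
Proof. induction m; intros H; simpl; auto. rewrite IHm, H; auto. Qed.

#[export] Instance sum_to_proper : Proper (eq ==> pointwise_relation nat eq ==> eq) sum_to.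
Proof. intros m m' <- f h H. apply sum_ext; intros; apply H. Qed.

Lemma sum_plus m f h : sum_to m (fun k => f k + h k) = sum_to m f + sum_to m h.
Proof. induction m; simpl; [ring|rewrite IHm; ring]. Qed.
Lemma sum_minus m f h : sum_to m (fun k => f k - h k) = sum_to m f - sum_to m h.
Proof. induction m; simpl; [ring|rewrite IHm; ring]. Qed.
Lemma sum_opp m f : sum_to m (fun k => - f k) = - sum_to m f.
Proof. induction m; simpl; [ring|rewrite IHm; ring]. Qed.
Lemma sum_scal_l m c f : c * sum_to m f = sum_to m (fun k => c * f k).
Proof. induction m; simpl; [ring|rewrite <- IHm; ring]. Qed.
Lemma sum_scal_r m c f : sum_to m f * c = sum_to m (fun k => f k * c).
Proof. induction m; simpl; [ring|rewrite <- IHm; ring]. Qed.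
Lemma sum_zero m : sum_to m (fun _ => 0) = 0.
Proof. induction m; simpl; [ring|rewrite IHm; ring]. Qed.
Lemma sum_swap m p F : sum_to m (fun k => sum_to p (fun j => F k j)) = sum_to p (fun j => sum_to m (fun k => F k j)).
Proof. induction m; simpl.
- symmetry; apply sum_zero.
- rewrite IHm. rewrite <- sum_plus. reflexivity. Qed.

Definition e0 (k : nat) : R := if Nat.eqb k 0 then 1 else 0.
Lemma sum_e0 m : (0 < m)%nat -> sum_to m e0 = 1.
Proof. intro H. induction m; [lia|]. simpl. destruct m.
- simpl. unfold e0; simpl; ring.
- rewrite IHm by lia. unfold e0. simpl. ring. Qed.

Definition DS (m : nat) (H : nat -> nat -> R) : R := sum_to m (fun k => sum_to m (fun j => H k j)).

Lemma toDS m H : sum_to m (fun k => sum_to m (fun j => H k j)) = DS m H.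
Proof. reflexivity. Qed.
Lemma single_DS m f : (0 < m)%nat -> sum_to m f = DS m (fun k j => f k * e0 j).
Proof. intro. unfold DS. apply sum_ext; intros. rewrite <- sum_scal_l, sum_e0; auto; ring. Qed.
Lemma scalar_DS m c : (0 < m)%nat -> c = DS m (fun k j => c * e0 k * e0 j).
Proof. intro. unfold DS. symmetry.
rewrite (sum_ext m _ (fun k => c * e0 k)). 2:{ intros. rewrite <- sum_scal_l, sum_e0; auto; ring. }
rewrite <- sum_scal_l, sum_e0; auto; ring. Qed.
Lemma DS_plus m f h : DS m f + DS m h = DS m (fun k j => f k j + h k j).
Proof. unfold DS. rewrite <- sum_plus. apply sum_ext; intros. rewrite <- sum_plus; auto. Qed.
Lemma DS_minus m f h : DS m f - DS m h = DS m (fun k j => f k j - h k j).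
Proof. unfold DS. rewrite <- sum_minus. apply sum_ext; intros. rewrite <- sum_minus; auto. Qed.
Lemma DS_opp m f : - DS m f = DS m (fun k j => - f k j).
Proof. unfold DS. rewrite <- sum_opp. apply sum_ext; intros. rewrite <- sum_opp; auto. Qed.
Lemma DS_scal_l m c f : c * DS m f = DS m (fun k j => c * f k j).
Proof. unfold DS. rewrite sum_scal_l. apply sum_ext; intros. rewrite sum_scal_l; auto. Qed.
Lemma DS_scal_r m c f : DS m f * c = DS m (fun k j => f k j * c).
Proof. unfold DS. rewrite sum_scal_r. apply sum_ext; intros. rewrite sum_scal_r; auto. Qed.
Lemma DS_plus_sc_l m c f : (0 < m)%nat -> c + DS m f = DS m (fun k j => c * e0 k * e0 j + f k j).
Proof. intro. rewrite (scalar_DS m c) at 1 by auto. apply DS_plus. Qed.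
Lemma DS_plus_sc_r m c f : (0 < m)%nat -> DS m f + c = DS m (fun k j => f k j + c * e0 k * e0 j).
Proof. intro. rewrite (scalar_DS m c) at 1 by auto. apply DS_plus. Qed.
Lemma DS_minus_sc_l m c f : (0 < m)%nat -> c - DS m f = DS m (fun k j => c * e0 k * e0 j - f k j).
Proof. intro. rewrite (scalar_DS m c) at 1 by auto. apply DS_minus. Qed.
Lemma DS_minus_sc_r m c f : (0 < m)%nat -> DS m f - c = DS m (fun k j => f k j - c * e0 k * e0 j).
Proof. intro. rewrite (scalar_DS m c) at 1 by auto. apply DS_minus. Qed.

Lemma DS_symm_zero m H : (forall k j, (k < m)%nat -> (j < m)%nat -> H k j + H j k = 0) -> DS m H = 0.
Proof. intro Hs. assert (E : DS m H = DS m (fun k j => H j k)).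
{ unfold DS. rewrite sum_swap. reflexivity. }
assert (E2 : DS m H + DS m (fun k j => H j k) = 0).
{ rewrite DS_plus. unfold DS. rewrite <- (sum_zero m). apply sum_ext; intros k Hk.
  rewrite <- (sum_zero m). apply sum_ext; intros j Hj. auto. }
lra. Qed.

Ltac has_DS t := match t with context [DS _ _] => idtac end.
Ltac no_DS t := match t with context [DS _ _] => fail 1 | _ => idtac end.

Ltac ds_merge Hm :=
  repeat (first
   [ rewrite DS_plus | rewrite DS_minus | rewrite DS_opp
   | match goal with |- context [?c * DS ?m ?f] => no_DS c; rewrite (DS_scal_l m c f) end
   | match goal with |- context [DS ?m ?f * ?c] => no_DS c; rewrite (DS_scal_r m c f) end
   | match goal with |- context [?c + DS ?m ?f] => no_DS c; rewrite (DS_plus_sc_l m c f Hm) end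
   | match goal with |- context [DS ?m ?f + ?c] => no_DS c; rewrite (DS_plus_sc_r m c f Hm) end
   | match goal with |- context [?c - DS ?m ?f] => no_DS c; rewrite (DS_minus_sc_l m c f Hm) end
   | match goal with |- context [DS ?m ?f - ?c] => no_DS c; rewrite (DS_minus_sc_r m c f Hm) end ]).

Lemma opp_sum m f : - sum_to m f = sum_to m (fun k => - f k).
Proof. symmetry; apply sum_opp. Qed.

Ltac distr := repeat (setoid_rewrite Rmult_plus_distr_l || setoid_rewrite Rmult_minus_distr_l
   || setoid_rewrite Rmult_plus_distr_r || setoid_rewrite Rmult_minus_distr_r
   || setoid_rewrite Ropp_mult_distr_l_reverse || setoid_rewrite Ropp_mult_distr_r_reverse
   || setoid_rewrite Ropp_plus_distr || setoid_rewrite Ropp_minus_distr || setoid_rewrite Ropp_involutive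
   || setoid_rewrite sum_scal_l || setoid_rewrite sum_scal_r || setoid_rewrite opp_sum
   || setoid_rewrite sum_plus || setoid_rewrite sum_minus).

Ltac etafix := repeat match goal with |- context [pd ?i (fun y => ?h y) ?x] =>
   change (pd i (fun y => h y) x) with (pd i h x) end.

Ltac fin := apply DS_symm_zero; intros; etafix; ring.

Ltac to_DS Hm := apply Rminus_diag_uniq; distr; repeat rewrite toDS; repeat rewrite (single_DS _ _ Hm); ds_merge Hm.
Lemma pd_sum_mul n U m F H i x : open_n n U ->
  (forall k, (k < m)%nat -> smooth n U (F k)) -> (forall k, (k < m)%nat -> smooth n U (H k)) ->
  (i < n)%nat -> U x ->
  pd i (fun y => sum_to m (fun k => F k y * H k y)) x
  = sum_to m (fun k => pd i (F k) x * H k x + F k x * pd i (H k) x).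
Proof. intros. rewrite (pd_sum n U m (fun k y => F k y * H k y)); auto.
apply sum_ext; intros. apply (pd_mul n U); auto. intros; apply smooth_mul; auto. Qed.

Definition riemG n (G : nat -> nat -> nat -> pt -> R) (a b c d : nat) : pt -> R :=
  fun x => pd a (G b c d) x - pd b (G a c d) x
           - sum_to n (fun k => G a c k x * G b k d x)
           + sum_to n (fun k => G a k d x * G b c k x).
Definition ricciG n G (a c : nat) : pt -> R := fun x => sum_to n (fun b => riemG n G a b c b x).
Definition cov03 (n : nat) (G : nat -> nat -> nat -> pt -> R)
  (T : nat -> nat -> nat -> pt -> R) (a b c e : nat) : pt -> R :=
  fun x => pd a (T b c e) x - sum_to n (fun k => G a b k x * T k c e x)
           - sum_to n (fun k => G a c k x * T b k e x)
           - sum_to n (fun k => G a e k x * T b c k x).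

Ltac sm := repeat (first
  [ assumption | lia
  | progress intros
  | apply smooth_sum; [assumption|]
  | apply smooth_add; [assumption| |]
  | apply smooth_sub; [assumption| |]
  | apply smooth_mul; [assumption| |]
  | apply smooth_opp; [assumption|]
  | apply smooth_pd; [lia|]
  | progress unfold cov02, cov03, cov13, cov14, cov01, riemG, ricciG
  | match goal with H : _ |- smooth _ _ _ => solve [apply H; lia] end
  | apply smooth_const ]).

Ltac pdx n U := repeat (first
  [ rewrite (pd_sum_mul n U) by sm
  | rewrite (pd_sub n U) by sm
  | rewrite (pd_add n U) by sm
  | rewrite (pd_mul n U) by sm
  | rewrite (pd_opp n U) by sm
  | rewrite (pd_sum n U) by sm
  | rewrite pd_const ]).

Lemma ricci_id n U G T (HU : open_n n U)
  (HG : forall i j k, (i < n)%nat -> (j < n)%nat -> (k < n)%nat -> smooth n U (G i j k))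
  (Gsym : forall i j, G i j = G j i)
  (HT : forall i j, (i < n)%nat -> (j < n)%nat -> smooth n U (T i j))
  a b c e x (Ha : (a < n)%nat) (Hb : (b < n)%nat) (Hc : (c < n)%nat) (He : (e < n)%nat) (Hx : U x) :
  cov03 n G (cov02 n G T) a b c e x - cov03 n G (cov02 n G T) b a c e x
  = - sum_to n (fun d => riemG n G a b c d x * T d e x) - sum_to n (fun d => riemG n G a b e d x * T c d x).
Proof. assert (Hn : (0 < n)%nat) by lia.
unfold cov03, cov02. pdx n U.
rewrite (clairaut n U (T c e) a b) by sm.
unfold riemG. rewrite (Gsym b a).
to_DS Hn. fin. Qed.
Lemma bianchi2 n U G (HU : open_n n U)
  (HG : forall i j k, (i < n)%nat -> (j < n)%nat -> (k < n)%nat -> smooth n U (G i j k))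
  (Gsym : forall i j, G i j = G j i)
  a b c e d x (Ha : (a < n)%nat) (Hb : (b < n)%nat) (Hc : (c < n)%nat) (He : (e < n)%nat) (Hd : (d < n)%nat) (Hx : U x) :
  cov13 n G (riemG n G) a b c e d x + cov13 n G (riemG n G) b c a e d x + cov13 n G (riemG n G) c a b e d x = 0.
Proof. assert (Hn : (0 < n)%nat) by lia.
unfold cov13, riemG. pdx n U.
rewrite (clairaut n U (G c e d) b a) by sm.
rewrite (clairaut n U (G b e d) c a) by sm.
rewrite (clairaut n U (G a e d) c b) by sm.
rewrite (Gsym b a), (Gsym c a), (Gsym c b).
to_DS Hn. fin. Qed.
Lemma contract13 n U G T (HU : open_n n U)
  (HG : forall i j k, (i < n)%nat -> (j < n)%nat -> (k < n)%nat -> smooth n U (G i j k))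
  (HT : forall i j k l, (i < n)%nat -> (j < n)%nat -> (k < n)%nat -> (l < n)%nat -> smooth n U (T i j k l))
  a b e x (Ha : (a < n)%nat) (Hb : (b < n)%nat) (He : (e < n)%nat) (Hx : U x) :
  sum_to n (fun m => cov13 n G T a b m e m x)
  = cov02 n G (fun b e y => sum_to n (fun m => T b m e m y)) a b e x.
Proof. assert (Hn : (0 < n)%nat) by lia. unfold cov13, cov02. pdx n U. to_DS Hn. fin. Qed.

Lemma cov13_antisym n U G T (HU : open_n n U)
  (HT : forall i j k l, (i < n)%nat -> (j < n)%nat -> (k < n)%nat -> (l < n)%nat -> smooth n U (T i j k l))
  (Ha : forall i j k l y, T i j k l y = - T j i k l y)
  f a b c d x (Hf : (f < n)%nat) (Ha' : (a < n)%nat) (Hb : (b < n)%nat) (Hc : (c < n)%nat) (Hd : (d < n)%nat) (Hx : U x) :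
  cov13 n G T f a b c d x = - cov13 n G T f b a c d x.
Proof. assert (Hn : (0 < n)%nat) by lia. unfold cov13.
assert (E : T a b c d = fun y => - T b a c d y) by (apply functional_extensionality; auto).
rewrite E. rewrite (pd_opp n U) by sm.
assert (E2 : forall k y, T k b c d y = - T b k c d y) by auto.
assert (E3 : forall k y, T a k c d y = - T k a c d y) by auto.
assert (E4 : forall k y, T a b k d y = - T b a k d y) by auto.
assert (E5 : forall k y, T a b c k y = - T b a c k y) by auto.
setoid_rewrite E2. setoid_rewrite E3. setoid_rewrite E4. setoid_rewrite E5.
to_DS Hn. apply DS_symm_zero; intros; etafix. ring. Qed.

Lemma riemG_antisym n G a b c d y : riemG n G a b c d y = - riemG n G b a c d y.
Proof. unfold riemG.
rewrite (sum_ext n (fun k => G b c k y * G a k d y) (fun k => G a k d y * G b c k y)) by (intros; ring).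
rewrite (sum_ext n (fun k => G b k d y * G a c k y) (fun k => G a c k y * G b k d y)) by (intros; ring).
ring. Qed.

Lemma contracted_bianchi n U G (HU : open_n n U)
  (HG : forall i j k, (i < n)%nat -> (j < n)%nat -> (k < n)%nat -> smooth n U (G i j k))
  (Gsym : forall i j, G i j = G j i)
  b c e x (Hb : (b < n)%nat) (Hc : (c < n)%nat) (He : (e < n)%nat) (Hx : U x) :
  sum_to n (fun m => cov13 n G (riemG n G) m b c e m x)
  = - cov02 n G (ricciG n G) b c e x + cov02 n G (ricciG n G) c b e x.
Proof.
assert (HR : forall i j k l, (i < n)%nat -> (j < n)%nat -> (k < n)%nat -> (l < n)%nat -> smooth n U (riemG n G i j k l)) by (intros; sm).
assert (B : sum_to n (fun m => cov13 n G (riemG n G) m b c e m x + cov13 n G (riemG n G) b c m e m x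
   + cov13 n G (riemG n G) c m b e m x) = 0).
{ rewrite <- (sum_zero n). apply sum_ext; intros m Hm. apply bianchi2 with U; auto. }
rewrite !sum_plus in B.
rewrite (sum_ext n (fun m => cov13 n G (riemG n G) c m b e m x) (fun m => - cov13 n G (riemG n G) c b m e m x)) in B.
2:{ intros. apply cov13_antisym with U; auto. apply riemG_antisym. }
rewrite sum_opp in B. rewrite (contract13 n U G (riemG n G) HU HG HR b c e x) in B by auto.
rewrite (contract13 n U G (riemG n G) HU HG HR c b e x) in B by auto.
unfold ricciG. lra. Qed.
Lemma contr_prod n U G lam K (HU : open_n n U)
  (HG : forall i j k, (i < n)%nat -> (j < n)%nat -> (k < n)%nat -> smooth n U (G i j k))
  (HK : forall i j k l, (i < n)%nat -> (j < n)%nat -> (k < n)%nat -> (l < n)%nat -> smooth n U (K i j k l))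
  (Hl : forall i, (i < n)%nat -> smooth n U (lam i))
  a b c e x (Ha : (a < n)%nat) (Hb : (b < n)%nat) (Hc : (c < n)%nat) (He : (e < n)%nat) (Hx : U x) :
  cov03 n G (fun b c e y => sum_to n (fun m => lam m y * K b c e m y)) a b c e x
  = sum_to n (fun m => cov01 n G lam a m x * K b c e m x + lam m x * cov13 n G K a b c e m x).
Proof. assert (Hn : (0 < n)%nat) by lia. unfold cov03, cov01, cov13. pdx n U. to_DS Hn. fin. Qed.

Lemma cov14_P5 n U G lam K (HU : open_n n U)
  (HG : forall i j k, (i < n)%nat -> (j < n)%nat -> (k < n)%nat -> smooth n U (G i j k))
  (HK : forall i j k l, (i < n)%nat -> (j < n)%nat -> (k < n)%nat -> (l < n)%nat -> smooth n U (K i j k l))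
  (Hl : forall i, (i < n)%nat -> smooth n U (lam i))
  f a b c d e x (Hf : (f < n)%nat) (Ha : (a < n)%nat) (Hb : (b < n)%nat) (Hc : (c < n)%nat) (Hd : (d < n)%nat) (He : (e < n)%nat) (Hx : U x) :
  cov14 n G (fun a b c d e y => lam a y * K b c d e y + lam b y * K c a d e y + lam c y * K a b d e y) f a b c d e x
  = cov01 n G lam f a x * K b c d e x + lam a x * cov13 n G K f b c d e x
       + (cov01 n G lam f b x * K c a d e x + lam b x * cov13 n G K f c a d e x)
       + (cov01 n G lam f c x * K a b d e x + lam c x * cov13 n G K f a b d e x).
Proof. assert (Hn : (0 < n)%nat) by lia. unfold cov14, cov01, cov13. pdx n U. to_DS Hn. fin. Qed.

Definition hess n G (phi : pt -> R) (a c : nat) : pt -> R :=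
  fun x => pd a (pd c phi) x - sum_to n (fun k => G a c k x * pd k phi x).

Lemma cod_prod n U G aT phi (HU : open_n n U)
  (HG : forall i j k, (i < n)%nat -> (j < n)%nat -> (k < n)%nat -> smooth n U (G i j k))
  (Ha : forall i j, (i < n)%nat -> (j < n)%nat -> smooth n U (aT i j))
  (Hp : smooth n U phi)
  a b c e x (Ha' : (a < n)%nat) (Hb : (b < n)%nat) (Hc : (c < n)%nat) (He : (e < n)%nat) (Hx : U x) :
  cov03 n G (fun b c e y => aT b e y * pd c phi y - aT c e y * pd b phi y) a b c e x
  = cov02 n G aT a b e x * pd c phi x + aT b e x * hess n G phi a c x
    - cov02 n G aT a c e x * pd b phi x - aT c e x * hess n G phi a b x.
Proof. assert (Hn : (0 < n)%nat) by lia. unfold cov03, cov02, hess. pdx n U. to_DS Hn. fin. Qed.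

Lemma cov03_lin n U G F H A B (HU : open_n n U)
  (HF : forall i j k, (i < n)%nat -> (j < n)%nat -> (k < n)%nat -> smooth n U (F i j k))
  (HH : forall i j k, (i < n)%nat -> (j < n)%nat -> (k < n)%nat -> smooth n U (H i j k))
  a b c e x (Ha : (a < n)%nat) (Hb : (b < n)%nat) (Hc : (c < n)%nat) (He : (e < n)%nat) (Hx : U x) :
  cov03 n G (fun b c e y => A * F b c e y + B * H b c e y) a b c e x
  = A * cov03 n G F a b c e x + B * cov03 n G H a b c e x.
Proof. assert (Hn : (0 < n)%nat) by lia. unfold cov03. pdx n U. to_DS Hn. fin. Qed.

Lemma cov03_asym n U G F (HU : open_n n U)
  (HF : forall i j k, (i < n)%nat -> (j < n)%nat -> (k < n)%nat -> smooth n U (F i j k))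
  a b c e x (Ha : (a < n)%nat) (Hb : (b < n)%nat) (Hc : (c < n)%nat) (He : (e < n)%nat) (Hx : U x) :
  cov03 n G (fun b c e y => - F b c e y + F c b e y) a b c e x
  = - cov03 n G F a b c e x + cov03 n G F a c b e x.
Proof. assert (Hn : (0 < n)%nat) by lia. unfold cov03. pdx n U. to_DS Hn. fin. Qed.
Definition agreeG n (U : pt -> Prop) (G1 G2 : nat -> nat -> nat -> pt -> R) :=
  forall i j k y, (i < n)%nat -> (j < n)%nat -> (k < n)%nat -> U y -> G1 i j k y = G2 i j k y.

Ltac trsum HG HT := apply sum_ext; intros; repeat (rewrite HG by (auto; lia)); repeat (rewrite HT by (auto; lia)); reflexivity.

Lemma cov01_tr n U G1 G2 T1 T2 : open_n n U -> agreeG n U G1 G2 ->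
  (forall i y, (i < n)%nat -> U y -> T1 i y = T2 i y) ->
  forall a b x, (a < n)%nat -> (b < n)%nat -> U x -> cov01 n G1 T1 a b x = cov01 n G2 T2 a b x.
Proof. intros HU HG HT a b x Ha Hb Hx. unfold cov01. f_equal.
- apply pd_local with n U; auto.
- trsum HG HT. Qed.

Lemma cov02_tr n U G1 G2 T1 T2 : open_n n U -> agreeG n U G1 G2 ->
  (forall i j y, (i < n)%nat -> (j < n)%nat -> U y -> T1 i j y = T2 i j y) ->
  forall a b c x, (a < n)%nat -> (b < n)%nat -> (c < n)%nat -> U x -> cov02 n G1 T1 a b c x = cov02 n G2 T2 a b c x.
Proof. intros HU HG HT a b c x Ha Hb Hc Hx. unfold cov02. f_equal; [f_equal|].
- apply pd_local with n U; auto.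
- trsum HG HT.
- trsum HG HT. Qed.

Lemma cov03_tr n U G1 G2 T1 T2 : open_n n U -> agreeG n U G1 G2 ->
  (forall i j k y, (i < n)%nat -> (j < n)%nat -> (k < n)%nat -> U y -> T1 i j k y = T2 i j k y) ->
  forall a b c e x, (a < n)%nat -> (b < n)%nat -> (c < n)%nat -> (e < n)%nat -> U x ->
  cov03 n G1 T1 a b c e x = cov03 n G2 T2 a b c e x.
Proof. intros HU HG HT a b c e x Ha Hb Hc He Hx. unfold cov03. f_equal; [f_equal; [f_equal|]|].
- apply pd_local with n U; auto.
- trsum HG HT.
- trsum HG HT.
- trsum HG HT. Qed.

Lemma cov13_tr n U G1 G2 T1 T2 : open_n n U -> agreeG n U G1 G2 ->
  (forall i j k l y, (i < n)%nat -> (j < n)%nat -> (k < n)%nat -> (l < n)%nat -> U y -> T1 i j k l y = T2 i j k l y) ->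
  forall a b c d e x, (a < n)%nat -> (b < n)%nat -> (c < n)%nat -> (d < n)%nat -> (e < n)%nat -> U x ->
  cov13 n G1 T1 a b c d e x = cov13 n G2 T2 a b c d e x.
Proof. intros HU HG HT a b c d e x Ha Hb Hc Hd He Hx. unfold cov13. f_equal; [f_equal; [f_equal; [f_equal|]|]|].
- apply pd_local with n U; auto.
- trsum HG HT.
- trsum HG HT.
- trsum HG HT.
- trsum HG HT. Qed.

Lemma cov14_tr n U G1 G2 T1 T2 : open_n n U -> agreeG n U G1 G2 ->
  (forall i j k l p y, (i < n)%nat -> (j < n)%nat -> (k < n)%nat -> (l < n)%nat -> (p < n)%nat -> U y -> T1 i j k l p y = T2 i j k l p y) ->
  forall f a b c d e x, (f < n)%nat -> (a < n)%nat -> (b < n)%nat -> (c < n)%nat -> (d < n)%nat -> (e < n)%nat -> U x ->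
  cov14 n G1 T1 f a b c d e x = cov14 n G2 T2 f a b c d e x.
Proof. intros HU HG HT f a b c d e x Hf Ha Hb Hc Hd He Hx. unfold cov14. f_equal; [f_equal; [f_equal; [f_equal; [f_equal|]|]|]|].
- apply pd_local with n U; auto.
- trsum HG HT.
- trsum HG HT.
- trsum HG HT.
- trsum HG HT.
- trsum HG HT. Qed.

Lemma riemG_tr n U G1 G2 : open_n n U -> agreeG n U G1 G2 ->
  forall a b c d x, (a < n)%nat -> (b < n)%nat -> (c < n)%nat -> (d < n)%nat -> U x ->
  riemG n G1 a b c d x = riemG n G2 a b c d x.
Proof. intros HU HG a b c d x Ha Hb Hc Hd Hx. unfold riemG. f_equal; [f_equal; [f_equal|]|].
- apply pd_local with n U; auto; intros; apply HG; auto.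
- apply pd_local with n U; auto; intros; apply HG; auto.
- trsum HG HG.
- trsum HG HG. Qed.

Lemma ricciG_tr n U G1 G2 : open_n n U -> agreeG n U G1 G2 ->
  forall a c x, (a < n)%nat -> (c < n)%nat -> U x ->
  ricciG n G1 a c x = ricciG n G2 a c x.
Proof. intros. unfold ricciG. apply sum_ext; intros. apply riemG_tr with U; auto. Qed.

Lemma riemann_eq n g ginv a b c d x : riemann n g ginv a b c d x = riemG n (christoffel n g ginv) a b c d x.
Proof. reflexivity. Qed.
Lemma ricci_eq n g ginv a c x : ricci n g ginv a c x = ricciG n (christoffel n g ginv) a c x.
Proof. reflexivity. Qed.
Lemma bianchi1 n G (Gsym : forall i j, G i j = G j i) a b c d x (Hn : (0 < n)%nat) :
  riemG n G a b c d x + riemG n G b c a d x + riemG n G c a b d x = 0.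
Proof. unfold riemG. rewrite (Gsym b a), (Gsym c a), (Gsym c b).
to_DS Hn. fin. Qed.

Theorem mainTheorem12
  (n : nat) (U : pt -> Prop) (g ginv : nat -> nat -> pt -> R)
  (K : nat -> nat -> nat -> nat -> pt -> R)
  (A B : R) (phi : pt -> R) (aT : nat -> nat -> pt -> R) (lam : nat -> pt -> R)
  (HU : open_n n U)
  (Hg : riemannian n U g ginv)
  (HKs : forall b c d e, (b < n)%nat -> (c < n)%nat -> (d < n)%nat -> (e < n)%nat ->
           smooth n U (K b c d e))
  (Hphis : smooth n U phi)
  (Has : forall b c, (b < n)%nat -> (c < n)%nat -> smooth n U (aT b c))
  (Hlams : forall a, (a < n)%nat -> smooth n U (lam a))
  (HA : A <> 0) (HB : B <> 0)
  (Hasym : forall b c x, (b < n)%nat -> (c < n)%nat -> U x -> aT b c x = aT c b x)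
  (Hcod : forall b c d x, (b < n)%nat -> (c < n)%nat -> (d < n)%nat -> U x ->
     cov02 n (christoffel n g ginv) aT b c d x = cov02 n (christoffel n g ginv) aT c b d x)
  (HK : forall b c e x, (b < n)%nat -> (c < n)%nat -> (e < n)%nat -> U x ->
     sum_to n (fun m => cov13 n (christoffel n g ginv) K m b c e m x)
     = A * sum_to n (fun m => cov13 n (christoffel n g ginv) (riemann n g ginv) m b c e m x)
       + B * (aT b e x * pd c phi x - aT c e x * pd b phi x))
  (Hrec : forall a b c d e x, (a < n)%nat -> (b < n)%nat -> (c < n)%nat -> (d < n)%nat ->
     (e < n)%nat -> U x ->
     cov13 n (christoffel n g ginv) K a b c d e x = lam a x * K b c d e x)
  (Hlam0 : exists a x, (a < n)%nat /\ U x /\ lam a x <> 0)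
  (Hclosed : forall a b x, (a < n)%nat -> (b < n)%nat -> U x ->
     cov01 n (christoffel n g ginv) lam a b x = cov01 n (christoffel n g ginv) lam b a x) :
  forall a b c e x, (a < n)%nat -> (b < n)%nat -> (c < n)%nat -> (e < n)%nat -> U x ->
    sum_to n (fun m => ricci n g ginv a m x * riemann n g ginv b c e m x)
    + sum_to n (fun m => ricci n g ginv b m x * riemann n g ginv c a e m x)
    + sum_to n (fun m => ricci n g ginv c m x * riemann n g ginv a b e m x)
    = / A * sum_to n (fun m => cov14 n (christoffel n g ginv)
                                 (Bten n (christoffel n g ginv) K) m a b c e m x).
Proof.
intros a b c e x Ha Hb Hc He Hx.
assert (Hn : (0 < n)%nat) by lia.
destruct Hg as [Hgs [Hgis [Hgsym _]]].
set (Gc := christoffel n g ginv) in *.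
assert (HGc : forall i j k, (i < n)%nat -> (j < n)%nat -> (k < n)%nat -> smooth n U (Gc i j k)).
{ intros. unfold Gc, christoffel. sm. }
assert (Gcsym : forall i j k y, (i < n)%nat -> (j < n)%nat -> U y -> Gc i j k y = Gc j i k y).
{ intros i j k y Hi Hj Hy. unfold Gc, christoffel. f_equal. apply sum_ext; intros l Hl.
  rewrite (pd_local n U (g i j) (g j i)) by (auto; intros; apply Hgsym; auto). ring. }
set (Gs := fun i j k y => (Gc i j k y + Gc j i k y) * / 2).
assert (GsSym : forall i j, Gs i j = Gs j i).
{ intros. apply functional_extensionality; intro k; apply functional_extensionality; intro y. unfold Gs; ring. }
assert (HGs : forall i j k, (i < n)%nat -> (j < n)%nat -> (k < n)%nat -> smooth n U (Gs i j k)).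
{ intros. unfold Gs. sm. }
assert (AG : agreeG n U Gc Gs).
{ intros i j k y Hi Hj Hk Hy. unfold Gs. rewrite (Gcsym j i) by auto. field. }
assert (Hrec' : forall a b c d e y, (a < n)%nat -> (b < n)%nat -> (c < n)%nat -> (d < n)%nat -> (e < n)%nat -> U y ->
   cov13 n Gs K a b c d e y = lam a y * K b c d e y).
{ intros a0 b0 c0 d e0' y H0 H1 H2 H3 H4 H5. transitivity (cov13 n Gc K a0 b0 c0 d e0' y).
  - symmetry; apply cov13_tr with U; auto.
  - apply Hrec; auto. }
assert (Hcl' : forall a b y, (a < n)%nat -> (b < n)%nat -> U y -> cov01 n Gs lam a b y = cov01 n Gs lam b a y).
{ intros. rewrite <- (cov01_tr n U Gc Gs lam lam) by auto. rewrite <- (cov01_tr n U Gc Gs lam lam) by auto. auto. }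
assert (Hcod' : forall b c d y, (b < n)%nat -> (c < n)%nat -> (d < n)%nat -> U y -> cov02 n Gs aT b c d y = cov02 n Gs aT c b d y).
{ intros. rewrite <- (cov02_tr n U Gc Gs aT aT) by auto. rewrite <- (cov02_tr n U Gc Gs aT aT) by auto. auto. }
assert (RieT : forall i j k l y, (i < n)%nat -> (j < n)%nat -> (k < n)%nat -> (l < n)%nat -> U y ->
   riemann n g ginv i j k l y = riemG n Gs i j k l y).
{ intros. rewrite riemann_eq. apply riemG_tr with U; auto. }
assert (RicT : forall i j y, (i < n)%nat -> (j < n)%nat -> U y -> ricci n g ginv i j y = ricciG n Gs i j y).
{ intros. rewrite ricci_eq. apply ricciG_tr with U; auto. }
assert (HK' : forall b c e y, (b < n)%nat -> (c < n)%nat -> (e < n)%nat -> U y ->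
   sum_to n (fun m => lam m y * K b c e m y)
   = A * sum_to n (fun m => cov13 n Gs (riemG n Gs) m b c e m y)
     + B * (aT b e y * pd c phi y - aT c e y * pd b phi y)).
{ intros b0 c0 e0' y H0 H1 H2 H3. rewrite (sum_ext n _ (fun m => cov13 n Gc K m b0 c0 e0' m y)).
  2:{ intros. rewrite Hrec; auto. }
  rewrite HK by auto. f_equal. f_equal. apply sum_ext; intros. apply cov13_tr with U; auto. }
assert (HR : forall i j k l, (i < n)%nat -> (j < n)%nat -> (k < n)%nat -> (l < n)%nat -> smooth n U (riemG n Gs i j k l)) by (intros; sm).
assert (HRic : forall i j, (i < n)%nat -> (j < n)%nat -> smooth n U (ricciG n Gs i j)) by (intros; sm).
assert (HD : forall i j k, (i < n)%nat -> (j < n)%nat -> (k < n)%nat -> smooth n U (fun y => sum_to n (fun m => lam m y * K i j k m y))) by (intros; sm).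
assert (HdivR : forall i j k, (i < n)%nat -> (j < n)%nat -> (k < n)%nat -> smooth n U (fun y => sum_to n (fun m => cov13 n Gs (riemG n Gs) m i j k m y))) by (intros; sm).
assert (HSf : forall i j k, (i < n)%nat -> (j < n)%nat -> (k < n)%nat -> smooth n U (fun y => aT i k y * pd j phi y - aT j k y * pd i phi y)) by (intros; sm).
set (D := fun b c e y => sum_to n (fun m => lam m y * K b c e m y)).
set (divR := fun b c e y => sum_to n (fun m => cov13 n Gs (riemG n Gs) m b c e m y)).
set (Sf := fun b c e y => aT b e y * pd c phi y - aT c e y * pd b phi y).
assert (CDf : forall p q r s, (p < n)%nat -> (q < n)%nat -> (r < n)%nat -> (s < n)%nat ->
   cov03 n Gs D p q r s x = sum_to n (fun m => cov01 n Gs lam p m x * K q r s m x + lam m x * (lam p x * K q r s m x))).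
{ intros. unfold D. rewrite (contr_prod n U) by auto. apply sum_ext; intros. rewrite Hrec'; auto. }
assert (RHS1 : sum_to n (fun m => cov14 n Gc (Bten n Gc K) m a b c e m x)
   = cov03 n Gs D a b c e x + cov03 n Gs D b c a e x + cov03 n Gs D c a b e x).
{ rewrite !CDf by auto. rewrite <- !sum_plus. apply sum_ext; intros m Hm.
  rewrite (cov14_tr n U Gc Gs (Bten n Gc K) (fun a b c d e y => lam a y * K b c d e y + lam b y * K c a d e y + lam c y * K a b d e y)) by (auto; intros; unfold Bten; rewrite !Hrec; auto).
  rewrite (cov14_P5 n U) by auto.
  rewrite (Hcl' m a), (Hcl' m b), (Hcl' m c), (Hrec' m b c e m), (Hrec' m c a e m), (Hrec' m a b e m) by auto.
  ring. }
assert (St2 : forall p q r s, (p < n)%nat -> (q < n)%nat -> (r < n)%nat -> (s < n)%nat ->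
   cov03 n Gs D p q r s x = A * cov03 n Gs divR p q r s x + B * cov03 n Gs Sf p q r s x).
{ intros.
  assert (TA : forall i j k y, (i < n)%nat -> (j < n)%nat -> (k < n)%nat -> U y ->
     D i j k y = (fun b c e y => A * divR b c e y + B * Sf b c e y) i j k y) by (intros; apply HK'; auto).
  assert (AGs : agreeG n U Gs Gs) by (intros i j k y _ _ _ _; reflexivity).
  rewrite (cov03_tr n U Gs Gs D _ HU AGs TA) by auto.
  apply (cov03_lin n U); auto. }
assert (AGs : agreeG n U Gs Gs) by (intros i j k y _ _ _ _; reflexivity).
set (X := cov03 n Gs (cov02 n Gs (ricciG n Gs))).
assert (St3 : forall p q r s, (p < n)%nat -> (q < n)%nat -> (r < n)%nat -> (s < n)%nat ->
   cov03 n Gs divR p q r s x = - X p q r s x + X p r q s x).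
{ intros.
  assert (TA : forall i j k y, (i < n)%nat -> (j < n)%nat -> (k < n)%nat -> U y ->
     divR i j k y = (fun b c e y => - cov02 n Gs (ricciG n Gs) b c e y + cov02 n Gs (ricciG n Gs) c b e y) i j k y).
  { intros. unfold divR. apply (contracted_bianchi n U); auto. }
  rewrite (cov03_tr n U Gs Gs divR _ HU AGs TA) by auto.
  unfold X. apply (cov03_asym n U); auto. intros; sm. }
assert (Hsym : forall i j, (i < n)%nat -> (j < n)%nat -> hess n Gs phi i j x = hess n Gs phi j i x).
{ intros. unfold hess. rewrite (clairaut n U phi i j) by auto. rewrite (GsSym i j). reflexivity. }
assert (St4 : cov03 n Gs Sf a b c e x + cov03 n Gs Sf b c a e x + cov03 n Gs Sf c a b e x = 0).
{ unfold Sf. rewrite !(cod_prod n U) by auto.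
  rewrite (Hcod' b a e), (Hcod' c a e), (Hcod' c b e) by auto.
  rewrite (Hsym b a), (Hsym c a), (Hsym c b) by auto. ring. }
assert (RI : forall p q r s, (p < n)%nat -> (q < n)%nat -> (r < n)%nat -> (s < n)%nat ->
   X p q r s x - X q p r s x = - sum_to n (fun d => riemG n Gs p q r d x * ricciG n Gs d s x)
     - sum_to n (fun d => riemG n Gs p q s d x * ricciG n Gs r d x)).
{ intros. unfold X. apply (ricci_id n U); auto. }
assert (BI : sum_to n (fun d => riemG n Gs a b c d x * ricciG n Gs d e x)
   + sum_to n (fun d => riemG n Gs b c a d x * ricciG n Gs d e x)
   + sum_to n (fun d => riemG n Gs c a b d x * ricciG n Gs d e x) = 0).
{ rewrite <- !sum_plus. rewrite <- (sum_zero n). apply sum_ext; intros.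
  rewrite <- !Rmult_plus_distr_r. rewrite (bianchi1 n Gs GsSym a b c) by auto. ring. }
assert (L1 : sum_to n (fun m => ricci n g ginv a m x * riemann n g ginv b c e m x)
   = sum_to n (fun d => riemG n Gs b c e d x * ricciG n Gs a d x)).
{ apply sum_ext; intros. rewrite RicT, RieT by auto. ring. }
assert (L2 : sum_to n (fun m => ricci n g ginv b m x * riemann n g ginv c a e m x)
   = sum_to n (fun d => riemG n Gs c a e d x * ricciG n Gs b d x)).
{ apply sum_ext; intros. rewrite RicT, RieT by auto. ring. }
assert (L3 : sum_to n (fun m => ricci n g ginv c m x * riemann n g ginv a b e m x)
   = sum_to n (fun d => riemG n Gs a b e d x * ricciG n Gs c d x)).
{ apply sum_ext; intros. rewrite RicT, RieT by auto. ring. }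
rewrite L1, L2, L3, RHS1, !St2, !St3 by auto.
pose proof (RI a b c e) as R1. pose proof (RI b c a e) as R2. pose proof (RI c a b e) as R3.
specialize (R1 Ha Hb Hc He). specialize (R2 Hb Hc Ha He). specialize (R3 Hc Ha Hb He).
assert (KEY : (- X a b c e x + X a c b e x) + (- X b c a e x + X b a c e x) + (- X c a b e x + X c b a e x)
   = sum_to n (fun d => riemG n Gs b c e d x * ricciG n Gs a d x)
     + sum_to n (fun d => riemG n Gs c a e d x * ricciG n Gs b d x)
     + sum_to n (fun d => riemG n Gs a b e d x * ricciG n Gs c d x)) by lra.
match goal with |- ?L = _ => transitivity (/ A * (A * L + B * 0)) end.
- field; auto.
- rewrite <- St4, <- KEY. ring.
Qed.
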